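(* Let $q$ be a power of the prime $p$, $n$ a positive integer, $a\in\mathbb{F}_q$ with $a^n=1$, and $\delta\in\mathbb{F}_{q^n}$ nonzero with $\delta^q=a\delta$. Let $L_{g_a}(x)=x^{q^{n-1}}+a x^{q^{n-2}}+\cdots+a^{n-1}x$ (the linearized $q$-associate of $g_a(x)=\frac{x^n-1}{x-a}$). Let $f(x)=\sum_{i=0}^m a_i x^i\in\mathbb{F}_{q^n}[x]$, $h\in\mathbb{F}_q[x]$, and $k\in\mathbb{F}_{q^n}[x]$ with $k(\delta\mathbb{F}_q)\subseteq\mathbb{F}_q^*$, and let $P(x)=f(L_{g_a}(x))+k(L_{g_a}(x))\cdot L_h(x)$. Then $P$ is a permutation polynomial of $\mathbb{F}_{q^n}$ if and only if: (1) $\gcd\left(h(x),\frac{x^n-1}{x-a}\right)=1$; and (2) $\bar{Q}_a(x)=\frac{1}{a}\sum_{i=0}^m\mathrm{Tr}_{q^n/q}(\delta^{i-1}a_i)x^i+k(\delta x)h(a)x$ induces a permutation of $\mathbb{F}_q$. Moreover, in this case, if $R$ induces the inverse permutation of $\bar{Q}_a$ on $\mathbb{F}_q$, then the inverse of the permutation of $\mathbb{F}_{q^n}$ induced by $P$ is induced by $$P_0(x)=F(\delta^{-1}L_{g_a}(x))+k(\delta R(\delta^{-1}L_{g_a}(x)))^{q-2}\cdot L_H(x),$$ where $H\in\mathbb{F}_q[x]$ and $F\in\mathbb{F}_{q^n}[x]$ are as follows: (i) if $p\mid n$: $H$ is the unique polynomial of degree at most $n-1$ with $h(x)H(x)\equiv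 1\pmod{x^n-1}$ (such $H$ exists, since when $p\mid n$ condition (1) is equivalent to $\gcd(h(x),x^n-1)=1$), and $F$ is any polynomial with $F(x)\equiv -k(\delta R(x))^{q-2}\cdot L_H(f(\delta R(x)))\pmod{x^q-x}$; (ii) if $p\nmid n$: $H$ is the unique polynomial of degree at most $n-2$ with $h(x)H(x)\equiv 1\pmod{\frac{x^n-1}{x-a}}$, and $F$ is any polynomial with $F(x)\equiv M(\delta R(x))\pmod{x^q-x}$, where $M(x)=-k(x)^{q-2}\cdot L_H(f(x))+a x\cdot\frac{1-h(a)H(a)}{n}$.
   Context: For $u(x)=\sum_{i=0}^m c_i x^i\in\mathbb{F}_q[x]$, its linearized $q$-associate is $L_u(x)=\sum_{i=0}^m c_i x^{q^i}$. $\mathrm{Tr}_{q^n/q}(x)=x+x^q+\cdots+x^{q^{n-1}}$. A permutation polynomial of a finite field is a polynomial inducing a bijection of it. *)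

(* Defs.v *)
From HB Require Import structures.
From mathcomp Require Import all_boot all_order all_algebra all_field.
Set Implicit Arguments. Unset Strict Implicit. Unset Printing Implicit Defensive.
Import GRing.Theory.
Local Open Scope ring_scope.

Section Defs.
Variable L : finFieldType.
Variable q : nat.

Definition Fq : {pred L} := [pred x : L | x ^+ q == x].

Definition poly_over_Fq (u : {poly L}) : Prop := forall i, u`_i \in Fq.

Definition LinP (u : {poly L}) : {poly L} :=
  \sum_(i < size u) u`_i *: 'X^(q ^ i).
Definition Lin (u : {poly L}) (x : L) : L := (LinP u).[x].

Definition Tr (n : nat) (x : L) : L := \sum_(i < n) x ^+ (q ^ i).

Definition ga (n : nat) (a : L) : {poly L} := ('X^n - 1) %/ ('X - a%:P).

Definition Pmap (n : nat) (a : L) (f h k : {poly L}) (x : L) : L :=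
  f.[Lin (ga n a) x] + k.[Lin (ga n a) x] * Lin h x.

Definition Qbar (n : nat) (a delta : L) (f h k : {poly L}) (x : L) : L :=
  a^-1 * (\sum_(i < size f) Tr n (delta ^+ i / delta * f`_i) * x ^+ i)
  + k.[delta * x] * h.[a] * x.

Definition P0map (n : nat) (a delta : L) (k R H F : {poly L}) (x : L) : L :=
  F.[delta^-1 * Lin (ga n a) x]
  + (k.[delta * R.[delta^-1 * Lin (ga n a) x]]) ^+ (q - 2) * Lin H x.

Definition permutes_on (S : {pred L}) (g : L -> L) : Prop :=
  {in S, forall x, g x \in S} /\ {in S &, injective g}.

End Defs.

(* Main.v *)
Require Import Defs.
From HB Require Import structures.
From mathcomp Require Import all_boot all_order all_algebra all_field.
From mathcomp Require Import zify ring.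
Unset Printing Implicit Defensive.
Import GRing.Theory.
Local Open Scope ring_scope.

Section Count.
Variable L : finFieldType.

Lemma card_roots (u : {poly L}) : u != 0 ->
  (#|[set x | root u x]| <= (size u).-1)%N.
Proof.
move=> u0; have := @max_poly_roots _ u (enum [set x | root u x]) u0.
rewrite enum_uniq -cardE => h.
have /h : all (root u) (enum [set x | root u x]).
  by apply/allP => x; rewrite mem_enum inE.
by move=> {}h; rewrite -ltnS prednK ?h // size_poly_gt0.
Qed.

Lemma card_additive (g : L -> L) : (forall x y, g (x + y) = g x + g y) ->
  #|L| = (#|[set x | g x == 0%R]| * #|[set g x | x in L]|)%N.
Proof.
move=> gD.
have g0 : g 0 = 0 by apply: (addIr (g 0)); rewrite -gD !add0r.
have gB x y : g (x - y) = g x - g y.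
  by apply: (addIr (g y)); rewrite -gD !subrK.
rewrite -[#|L|]sum1_card (partition_big g (mem [set g x | x in L])) //=; last first.
  by move=> i _; apply/imsetP; exists i.
rewrite mulnC -sum_nat_const; apply: eq_bigr => j /imsetP [x0 _ ->].
rewrite sum1_card.
rewrite (@eq_card _ _ [set k + x0 | k in [set x | g x == 0]]).
  by rewrite card_imset //; exact: addIr.
move=> i; rewrite -[LHS]/(g i == g x0); apply/eqP/imsetP => [gi | [k]].
  by exists (i - x0); rewrite ?inE ?gB ?gi ?subrr // subrK.
by rewrite inE => /eqP gk ->; rewrite gD gk add0r.
Qed.

End Count.

Section Frob.
Variables (L : finFieldType) (p q e : nat).
Hypotheses (pr_p : prime p) (chp : p \in [pchar L]) (e_gt0 : (0 < e)%N) (qE : q = (p ^ e)%N).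

Lemma q_gt1 : (1 < q)%N.
Proof.
rewrite qE; apply: (leq_trans (prime_gt1 pr_p)).
by rewrite -{1}(expn1 p) leq_exp2l ?prime_gt1.
Qed.

Lemma pnat_q i : [pchar L].-nat (q ^ i)%N.
Proof. by rewrite qE -expnM pnatX (pnatE _ pr_p) chp. Qed.

Lemma exprDq i (x y : L) : (x + y) ^+ (q ^ i)%N = x ^+ (q ^ i)%N + y ^+ (q ^ i)%N.
Proof. exact: exprDn_pchar (pnat_q i). Qed.

Definition frobq (x : L) := x ^+ q.

Lemma frobq_is_nmod : nmod_morphism frobq.
Proof.
split; first by rewrite /frobq expr0n; case: q q_gt1.
by move=> x y; rewrite /frobq -(expn1 q) exprDq.
Qed.

Lemma frobq_is_monoid : monoid_morphism frobq.
Proof. by split; [exact: expr1n | move=> x y; exact: exprMn]. Qed.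

HB.instance Definition _ := GRing.isNmodMorphism.Build L L frobq frobq_is_nmod.
HB.instance Definition _ := GRing.isMonoidMorphism.Build L L frobq frobq_is_monoid.


Implicit Types (x y c : L).
Local Notation FQ := (@Fq L q).
Local Notation OVER := (@poly_over_Fq L q).

Lemma FqP x : reflect (x ^+ q = x) (x \in FQ).
Proof. exact: eqP. Qed.

Lemma Fq_frob x : x \in FQ -> frobq x = x.
Proof. by move/FqP. Qed.

Lemma Fq_frobE x : (x \in FQ) = (frobq x == x).
Proof. by []. Qed.

Lemma Fq0 : 0 \in FQ. Proof. by rewrite Fq_frobE rmorph0. Qed.
Lemma Fq1 : 1 \in FQ. Proof. by rewrite Fq_frobE rmorph1. Qed.
Lemma FqD x y : x \in FQ -> y \in FQ -> x + y \in FQ.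
Proof. by rewrite !Fq_frobE rmorphD /= => /eqP-> /eqP->. Qed.
Lemma FqN x : x \in FQ -> - x \in FQ.
Proof. by rewrite !Fq_frobE rmorphN /= => /eqP->. Qed.
Lemma FqB x y : x \in FQ -> y \in FQ -> x - y \in FQ.
Proof. by move=> hx hy; rewrite FqD ?FqN. Qed.
Lemma FqM x y : x \in FQ -> y \in FQ -> x * y \in FQ.
Proof. by rewrite !Fq_frobE rmorphM /= => /eqP-> /eqP->. Qed.
Lemma FqV x : x \in FQ -> x^-1 \in FQ.
Proof. by rewrite !Fq_frobE /frobq exprVn => /eqP->. Qed.
Lemma FqX x m : x \in FQ -> x ^+ m \in FQ.
Proof. by rewrite !Fq_frobE rmorphXn /= => /eqP->. Qed.
Lemma Fq_sum (I : Type) (r : seq I) (P : pred I) (F : I -> L) :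
  (forall i, P i -> F i \in FQ) -> \sum_(i <- r | P i) F i \in FQ.
Proof. by move=> hF; apply: (big_ind (fun x => x \in FQ)) => //; [exact: Fq0 | exact: FqD]. Qed.

Lemma Fq_pow x i : x \in FQ -> x ^+ (q ^ i)%N = x.
Proof.
move/FqP=> hx; elim: i => [|i IH]; first by rewrite expr1.
by rewrite expnSr exprM IH hx.
Qed.

Implicit Types (u v : {poly L}).

Lemma LinE u x N : (size u <= N)%N ->
  Lin q u x = \sum_(i < N) u`_i * x ^+ (q ^ i)%N.
Proof.
move=> hN; rewrite /Lin /LinP horner_sum.
under eq_bigr do rewrite hornerZ hornerXn.
rewrite (big_ord_widen N (fun i => u`_i * x ^+ (q ^ i)%N)) // big_mkcond.
apply: eq_bigr => i _; case: ifP => // /negbT; rewrite -leqNgt => hi.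
by rewrite nth_default // mul0r.
Qed.

Lemma Lin0 x : Lin q 0 x = 0.
Proof. by rewrite (LinE _ _ 0) ?big_ord0 // size_poly0. Qed.

Lemma Lin_add u v x : Lin q (u + v) x = Lin q u x + Lin q v x.
Proof.
set N := maxn (size u) (size v).
rewrite (LinE _ _ N); last by apply: leq_trans (size_polyD _ _) _.
rewrite (LinE u _ N) ?leq_maxl // (LinE v _ N) ?leq_maxr //.
by rewrite -big_split /=; apply: eq_bigr => i _; rewrite coefD mulrDl.
Qed.

Lemma Lin_scale c u x : Lin q (c *: u) x = c * Lin q u x.
Proof.
rewrite (LinE _ _ (size u)) ?size_scale_leq // (LinE u _ (size u)) //.
by rewrite mulr_sumr; apply: eq_bigr => i _; rewrite coefZ mulrA.
Qed.

Lemma Lin_opp u x : Lin q (- u) x = - Lin q u x.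
Proof. by rewrite -scaleN1r Lin_scale mulN1r. Qed.

Lemma Lin_sub u v x : Lin q (u - v) x = Lin q u x - Lin q v x.
Proof. by rewrite Lin_add Lin_opp. Qed.

Lemma Lin_const c x : Lin q c%:P x = c * x.
Proof.
rewrite (LinE _ _ 1) ?size_polyC ?leq_b1 // big_ord1 coefC /=.
by rewrite expn0 expr1.
Qed.

Lemma Lin_Xn m x : Lin q 'X^m x = x ^+ (q ^ m)%N.
Proof.
rewrite (LinE _ _ m.+1) ?size_polyXn // big_ord_recr /= big1 ?add0r.
  by rewrite coefXn eqxx mul1r.
by move=> i _; rewrite coefXn /= (ltn_eqF (ltn_ord i)) mul0r.
Qed.

Lemma Lin_mulX u x : Lin q (u * 'X) x = Lin q u (x ^+ q).
Proof.
rewrite (LinE _ _ (size u).+1); last first.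
  by apply: leq_trans (size_mul_leq _ _) _; rewrite size_polyX addn2.
rewrite (LinE u _ (size u)) // big_ord_recl /= coefMX eqxx mul0r add0r.
apply: eq_bigr => i _; rewrite /bump /= add1n coefMX /=.
by rewrite expnS exprM.
Qed.

Lemma Lin_frob v x : OVER v -> Lin q v (x ^+ q) = (Lin q v x) ^+ q.
Proof.
move=> hv; rewrite (LinE _ _ (size v)) // (LinE v _ (size v)) //.
transitivity (frobq (\sum_(i < size v) v`_i * x ^+ (q ^ i)%N)); last by [].
rewrite rmorph_sum /=; apply: eq_bigr => i _.
rewrite rmorphM /= Fq_frob ?hv // /frobq -!exprM mulnC.
by [].
Qed.

Lemma Lin_mul u v x : OVER v -> Lin q (u * v) x = Lin q u (Lin q v x).
Proof.
move=> hv; move: x; elim/poly_ind: u => [|u c IH] x; first by rewrite mul0r !Lin0.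
have -> : (u * 'X + c%:P) * v = (u * v) * 'X + c *: v.
  by rewrite mulrDl mulrAC mul_polyC.
by rewrite !Lin_add Lin_mulX IH Lin_scale Lin_mulX Lin_const Lin_frob.
Qed.

Lemma Lin_addx u x y : Lin q u (x + y) = Lin q u x + Lin q u y.
Proof.
rewrite !(LinE _ _ (size u)) // -big_split /=.
by apply: eq_bigr => i _; rewrite exprDq mulrDr.
Qed.

Lemma Lin_scalex u c x : c \in FQ -> Lin q u (c * x) = c * Lin q u x.
Proof.
move=> hc; rewrite !(LinE _ _ (size u)) // mulr_sumr.
by apply: eq_bigr => i _; rewrite exprMn (Fq_pow c) // mulrCA.
Qed.

Lemma Lin_0x u : Lin q u 0 = 0.
Proof. by rewrite -(mul0r 0) Lin_scalex ?mul0r ?Fq0. Qed.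

Lemma Lin_subx u x y : Lin q u (x - y) = Lin q u x - Lin q u y.
Proof. by apply: (addIr (Lin q u y)); rewrite -Lin_addx !subrK. Qed.

Lemma coef_LinP u j :
  (LinP q u)`_j = \sum_(i < size u) u`_i * ((q ^ i)%N == j)%:R.
Proof. by rewrite /LinP coef_sum; apply: eq_bigr => i _; rewrite coefZ coefXn eq_sym. Qed.

Lemma size_LinP u : (size (LinP q u) <= (q ^ (size u).-1).+1)%N.
Proof.
apply/leq_sizeP => j hj; rewrite coef_LinP big1 // => i _.
have hi : (q ^ i <= q ^ (size u).-1)%N.
  by rewrite leq_exp2l ?q_gt1 // -ltnS prednK ?ltn_ord // (leq_ltn_trans _ (ltn_ord i)).
by rewrite eq_sym (gtn_eqF (leq_ltn_trans hi hj)) mulr0.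
Qed.

Lemma LinP_neq0 u : u != 0 -> LinP q u != 0.
Proof.
move=> u0; have s0 : (0 < size u)%N by rewrite size_poly_gt0.
have hl : (LinP q u)`_(q ^ (size u).-1) = lead_coef u.
  have hs : ((size u).-1 < size u)%N by rewrite ltn_predL.
  rewrite coef_LinP (bigD1 (Ordinal hs)) //= big1.
    by rewrite eqxx mulr1 addr0.
  move=> i hi; rewrite eqn_exp2l ?q_gt1 //.
  by rewrite (_ : (nat_of_ord i == (size u).-1) = false) ?mulr0 //; apply/negbTE; move: hi; apply: contra => /eqP hi; apply/eqP/val_inj.
apply: contraNneq u0 => h; by rewrite -lead_coef_eq0 -hl h coef0.
Qed.

Lemma card_kerLin u : u != 0 ->
  (#|[set x | Lin q u x == 0%R]| <= q ^ (size u).-1)%N.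
Proof.
move=> u0; rewrite (_ : [set x | Lin q u x == 0%R] = [set x | root (LinP q u) x]); last by apply/setP => x; rewrite !inE.
apply: leq_trans (@card_roots L _ (LinP_neq0 u u0)) _.
by rewrite -ltnS prednK ?size_LinP // size_poly_gt0 LinP_neq0.
Qed.




Lemma Lin_sumx u I (r : seq I) (P : pred I) (F : I -> L) :
  Lin q u (\sum_(i <- r | P i) F i) = \sum_(i <- r | P i) Lin q u (F i).
Proof. exact: (big_morph (Lin q u) (Lin_addx u) (Lin_0x u)). Qed.

Lemma Lin_sum I (r : seq I) (P : pred I) (F : I -> {poly L}) x :
  Lin q (\sum_(i <- r | P i) F i) x = \sum_(i <- r | P i) Lin q (F i) x.
Proof. exact: (big_morph (fun u => Lin q u x) (fun u v => Lin_add u v x) (Lin0 x)). Qed.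

Lemma Lin_X x : Lin q 'X x = x ^+ q.
Proof. by rewrite -['X]expr1 Lin_Xn expn1. Qed.

Lemma over_frob u : OVER u <-> map_poly frobq u = u.
Proof.
split=> [hu | hu i].
  by apply/polyP => i; rewrite coef_map /= Fq_frob.
by rewrite Fq_frobE -{2}hu coef_map.
Qed.

Lemma over_gcdp u v : OVER u -> OVER v ->
  OVER (gcdp u v).
Proof. by move=> /over_frob hu /over_frob hv; apply/over_frob; rewrite gcdp_map hu hv. Qed.

Lemma over_add u v : OVER u -> OVER v -> OVER (u + v).
Proof. by move=> hu hv i; rewrite coefD FqD. Qed.
Lemma over_opp u : OVER u -> OVER (- u).
Proof. by move=> hu i; rewrite coefN FqN. Qed.
Lemma over_Xn m : OVER 'X^m.
Proof. by move=> i; rewrite coefXn; case: (i == m); [exact: Fq1 | exact: Fq0]. Qed.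
Lemma over_C c : c \in FQ -> OVER c%:P.
Proof. by move=> hc i; rewrite coefC; case: (i == 0)%N => //; exact: Fq0. Qed.
Lemma over_scale c u : c \in FQ -> OVER u -> OVER (c *: u).
Proof. by move=> hc hu i; rewrite coefZ FqM. Qed.
Lemma over_sum I (r : seq I) (P : pred I) (F : I -> {poly L}) :
  (forall i, P i -> OVER (F i)) -> OVER (\sum_(i <- r | P i) F i).
Proof. by move=> hF j; rewrite coef_sum; apply: Fq_sum => i /hF. Qed.

Lemma horner_Fq u c : OVER u -> c \in FQ -> u.[c] \in FQ.
Proof. by move=> hu hc; rewrite horner_coef; apply: Fq_sum => i _; rewrite FqM ?FqX. Qed.

Variables (n : nat) (a delta : L).
Hypotheses (n_gt0 : (0 < n)%N) (cardL : #|L| = (q ^ n)%N) (aFq : a \in FQ)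
  (an1 : a ^+ n = 1) (d0 : delta != 0) (dq : delta ^+ q = a * delta).

Lemma xqn x : x ^+ (q ^ n)%N = x.
Proof. by rewrite -cardL expf_card. Qed.

Lemma a_neq0 : a != 0.
Proof. by apply: contra_eq_neq an1 => ->; rewrite expr0n; case: n n_gt0 => // m _; rewrite eq_sym oner_eq0. Qed.

Lemma a_pred : a ^+ n.-1 = a^-1.
Proof.
apply: (mulfI a_neq0); rewrite divff ?a_neq0 // -exprS prednK //.
Qed.

Lemma delta_pow i : delta ^+ (q ^ i)%N = a ^+ i * delta.
Proof.
elim: i => [|i IH]; first by rewrite expr1 expr0 mul1r.
rewrite expnSr exprM IH exprMn dq; have /FqP -> := FqX _ i aFq; by rewrite exprS; ring.
Qed.

Definition Sga : {poly L} := \sum_(i < n) 'X^(n.-1 - i) * (a%:P) ^+ i.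

Lemma XaS : ('X - a%:P) * Sga = 'X^n - 1.
Proof. by rewrite /Sga -subrXX -rmorphXn an1. Qed.

Lemma XaC_neq0 : ('X - a%:P) != 0.
Proof. by rewrite -size_poly_eq0 size_XsubC. Qed.

Lemma ga_eq : ga n a = Sga.
Proof. by rewrite /ga -XaS mulKp ?XaC_neq0. Qed.

Lemma XaGa : ('X - a%:P) * ga n a = 'X^n - 1.
Proof. by rewrite ga_eq XaS. Qed.

Lemma Sga_term i : 'X^(n.-1 - i) * (a%:P) ^+ i = a ^+ i *: 'X^(n.-1 - i).
Proof. by rewrite -rmorphXn mulrC mul_polyC. Qed.

Lemma ga_over : OVER (ga n a).
Proof.
rewrite ga_eq /Sga; apply: over_sum => i _; rewrite Sga_term.
by apply: over_scale; [exact: FqX | exact: over_Xn].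
Qed.

Lemma ga_neq0 : ga n a != 0.
Proof.
apply/eqP => h; have := XaGa; rewrite h mulr0 => /eqP; rewrite eq_sym.
by rewrite -size_poly_eq0 -polyC1 size_XnsubC.
Qed.

Lemma size_ga : size (ga n a) = n.
Proof.
have := size_mul XaC_neq0 ga_neq0; rewrite XaGa -polyC1 size_XnsubC // size_XsubC.
by move=> [].
Qed.

Notation T := (Lin q (ga n a)).

Lemma Lin_ga x : T x = \sum_(i < n) a ^+ i * x ^+ (q ^ (n.-1 - i))%N.
Proof.
rewrite ga_eq /Sga Lin_sum; apply: eq_bigr => i _.
by rewrite Sga_term Lin_scale Lin_Xn.
Qed.

Lemma T_frob x : T x ^+ q = a * T x.
Proof.
have := Lin_mul ('X - a%:P) (ga n a) x ga_over; rewrite XaGa Lin_sub Lin_Xn xqn.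
rewrite -polyC1 Lin_const mul1r subrr Lin_sub Lin_X Lin_const => /esym/eqP.
by rewrite subr_eq0 => /eqP.
Qed.

Lemma T_Fq x : delta^-1 * T x \in FQ.
Proof.
apply/FqP; rewrite exprMn exprVn dq T_frob invfM mulrA -[a^-1 * delta^-1 * a]mulrC.
by rewrite mulrA mulfV ?a_neq0 // mul1r.
Qed.

Lemma T_delta x : delta * (delta^-1 * T x) = T x.
Proof. by rewrite mulrA mulfV ?mul1r. Qed.

Lemma Lin_delta u z : z \in FQ -> Lin q u (delta * z) = z * delta * u.[a].
Proof.
move=> hz; rewrite mulrC Lin_scalex // -mulrA; congr (_ * _).
rewrite (LinE _ _ (size u)) // horner_coef mulr_sumr; apply: eq_bigr => i _.
by rewrite delta_pow; ring.
Qed.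

Lemma big_rev_nat (G : nat -> L) :
  \sum_(i < n) G (n.-1 - i)%N = \sum_(i < n) G i.
Proof.
rewrite [RHS](reindex_inj rev_ord_inj) /=; apply: eq_bigr => i _.
congr G; have := ltn_ord i; lia.
Qed.

Lemma T_deltab b : T (delta * b) = a^-1 * delta * Tr q n b.
Proof.
rewrite Lin_ga /Tr mulr_sumr -(big_rev_nat (fun j => a^-1 * delta * b ^+ (q ^ j)%N)); apply: eq_bigr => i _.
rewrite exprMn delta_pow mulrA mulrA -exprD.
have -> : (i + (n.-1 - i))%N = n.-1 by have := ltn_ord i; lia.
by rewrite a_pred; ring.
Qed.

Lemma T_comm u x : OVER u -> T (Lin q u x) = Lin q u (T x).
Proof.
by move=> hu; rewrite -(Lin_mul _ _ _ hu) -(Lin_mul _ _ _ ga_over) mulrC.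
Qed.

Variables (f h k : {poly L}).
Hypotheses (hh : OVER h)
  (hk : {in FQ, forall x, k.[delta * x] \in FQ /\ k.[delta * x] != 0}).

Notation P := (Pmap q n a f h k).
Notation Q := (Qbar q n a delta f h k).

Lemma key x : T (P x) = delta * Q (delta^-1 * T x).
Proof.
have hz := T_Fq x; set z := delta^-1 * T x in hz *.
have hy : T x = delta * z by rewrite /z T_delta.
rewrite /Pmap /Qbar hy Lin_addx (Lin_scalex _ _ _ (hk _ hz).1) (T_comm h x hh) hy Lin_delta //.
rewrite mulrDr; congr (_ + _); last by ring.
rewrite horner_coef Lin_sumx !mulr_sumr; apply: eq_bigr => i _.
have -> : f`_i * (delta * z) ^+ i = z ^+ i * (delta * (delta ^+ i / delta * f`_i)).
  by rewrite exprMn; field.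
by rewrite Lin_scalex ?FqX // T_deltab; ring.
Qed.

Lemma card_Fq : (#|FQ| <= q)%N.
Proof.
have hq := q_gt1.
have hs : size ('X^q - 'X : {poly L}) = q.+1.
  by rewrite size_polyDl ?size_polyXn // size_polyN size_polyX.
have hne : ('X^q - 'X : {poly L}) != 0 by rewrite -size_poly_eq0 hs.
rewrite (@eq_card _ _ [set x | root ('X^q - 'X) x]).
  by apply: leq_trans (@card_roots L _ hne) _; rewrite hs.
move=> x; rewrite inE rootE !hornerE subr_eq0; exact: esym (erefl _).
Qed.

Lemma T_onto z : z \in FQ -> exists x, T x = delta * z.
Proof.
move=> hz.
set I := [set T x | x in L]; set S := [set delta * z | z in FQ].
have sub : I \subset S.
  apply/subsetP => y /imsetP [x _ ->]; apply/imsetP.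
  by exists (delta^-1 * T x); [exact: T_Fq | rewrite T_delta].
have cS : (#|S| <= q)%N by rewrite card_imset ?card_Fq //; exact: mulfI.
have cI : (q <= #|I|)%N.
  have h1 := @card_additive L _ (Lin_addx (ga n a)); rewrite cardL in h1.
  have h2 := card_kerLin _ ga_neq0; rewrite size_ga in h2.
  have qp : (0 < q ^ n.-1)%N by rewrite expn_gt0 (ltnW q_gt1).
  rewrite -(leq_pmul2l qp) -expnSr prednK // h1 leq_mul2r h2 orbT //.
have : I == S by rewrite eqEcard sub (leq_trans cS cI).
move/eqP => IS.
have : delta * z \in I by rewrite IS; apply/imsetP; exists z.
by case/imsetP => x _ ->; exists x.
Qed.

Lemma Tr_Fq b : Tr q n b \in FQ.
Proof.
apply/FqP; rewrite /Tr.
transitivity (frobq (\sum_(i < n) b ^+ (q ^ i)%N)); first by [].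
rewrite rmorph_sum /=.
have -> : \sum_(i < n) frobq (b ^+ (q ^ i)%N) = \sum_(i < n) b ^+ (q ^ i.+1)%N.
  by apply: eq_bigr => i _; rewrite /frobq -exprM expnSr.
case: n n_gt0 xqn => // m _ hx.
by rewrite big_ord_recr big_ord_recl /= hx expn0 expr1 addrC.
Qed.

Lemma h_a : h.[a] \in FQ.
Proof. exact: horner_Fq. Qed.

Lemma Q_Fq z : z \in FQ -> Q z \in FQ.
Proof.
move=> hz; rewrite /Qbar; apply: FqD; last by rewrite !FqM ?h_a ?(hk _ hz).1.
apply: FqM; first exact: FqV.
by apply: Fq_sum => i _; apply: FqM; [exact: Tr_Fq | exact: FqX].
Qed.

Lemma ker_trivial : coprimep h (ga n a) ->
  forall x, Lin q h x = 0 -> T x = 0 -> x = 0.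
Proof.
case/Bezout_coprimepP => [[u1 u2]] /= he x hx hT.
have hs := eqp_size he; rewrite size_poly1 in hs.
have wC := size1_polyC (eq_leq hs).
have : Lin q (u1 * h + u2 * ga n a) x = 0.
  by rewrite Lin_add (Lin_mul _ _ _ hh) (Lin_mul _ _ _ ga_over) hx hT !Lin_0x addr0.
rewrite wC Lin_const => /eqP; rewrite mulf_eq0 => /orP [/eqP w0|/eqP //].
by move: hs; rewrite wC w0 size_poly0.
Qed.

Lemma ker_nontrivial : ~~ coprimep h (ga n a) ->
  exists2 x, x != 0 & Lin q h x = 0 /\ T x = 0.
Proof.
move=> nc; set d := gcdp h (ga n a).
have dO : OVER d by apply: over_gcdp => //; exact: ga_over.
have dn0 : d != 0 by rewrite gcdp_eq0 negb_and ga_neq0 orbT.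
have sd : (2 <= size d)%N.
  move: nc; rewrite /coprimep -/d; have := size_poly_gt0 d; rewrite dn0.
  by case: (size d) => [|[|]].
have dX : d %| 'X^n - 1.
  by rewrite -XaGa; apply: dvdp_mull; exact: dvdp_gcdr.
set E := ('X^n - 1) %/ d.
have hE : E * d = 'X^n - 1 by rewrite divpK.
have Xn0 : ('X^n - 1 : {poly L}) != 0 by rewrite -size_poly_eq0 -polyC1 size_XnsubC.
have En0 : E != 0 by apply: contraNneq Xn0 => E0; rewrite -hE E0 mul0r.
have sz : (size E + size d).-1 = n.+1.
  by rewrite -size_mul // hE -polyC1 size_XnsubC.
set K := [set x | Lin q d x == 0%R].
have hc := @card_additive L _ (Lin_addx d); rewrite cardL in hc.
have him : ([set Lin q d x | x in L] \subset [set x | Lin q E x == 0%R]).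
  apply/subsetP => y /imsetP [x _ ->]; rewrite inE -Lin_mul // hE.
  by rewrite Lin_sub Lin_Xn xqn -polyC1 Lin_const mul1r subrr.
have hKE := card_kerLin _ En0.
have cK : (2 <= #|K|)%N.
  have h1 : (q ^ n <= #|K| * q ^ (size E).-1)%N.
    by rewrite hc leq_mul2l (leq_trans (subset_leq_card him) hKE) orbT.
  have hn : n = ((size d).-1 + (size E).-1)%N.
    have sE : (0 < size E)%N by rewrite size_poly_gt0.
    move: sz sd sE; lia.
  have qp : (0 < q ^ (size E).-1)%N by rewrite expn_gt0 (ltnW q_gt1).
  rewrite hn expnD leq_pmul2r // in h1.
  apply: leq_trans h1; apply: leq_trans (q_gt1) _.
  by rewrite -{1}(expn1 q) leq_exp2l ?q_gt1 // -ltnS prednK // (ltnW sd).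
have : (0 < #|K :\ 0%R|)%N.
  have := cardsD1 0%R K; rewrite inE Lin_0x eqxx /= => hK.
  by move: cK; rewrite hK; case: #|K :\ 0%R|.
case/card_gt0P => x; rewrite !inE => /andP [xn0 /eqP Kx].
exists x => //; split.
  by rewrite -(divpK (dvdp_gcdl h (ga n a))) -/d Lin_mul // Kx Lin_0x.
by rewrite -(divpK (dvdp_gcdr h (ga n a))) -/d Lin_mul // Kx Lin_0x.
Qed.

Lemma part1 : bijective P <-> coprimep h (ga n a) /\ permutes_on FQ Q.
Proof.
split=> [bP | [cp [QF Qinj]]].
  have injP := bij_inj bP.
  split.
    apply/negPn/negP => nc; case: (ker_nontrivial nc) => x xn0 [hx hT].
    have : P x = P 0 by rewrite /Pmap hT hx !Lin_0x.
    by move/injP/eqP; rewrite (negbTE xn0).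
  split; first by move=> z hz; exact: Q_Fq.
  apply/imset_injP; rewrite eqn_leq leq_imset_card /=.
  apply: subset_leq_card; apply/subsetP => w hw; apply/imsetP.
  case: (T_onto _ hw) => x0 hx0; case: bP => g gK Kg.
  exists (delta^-1 * T (g x0)); first exact: T_Fq.
  by apply: (mulfI d0); rewrite -key Kg hx0.
apply: injF_bij => x1 x2 eP.
have e1 := key x1; rewrite eP key in e1.
have hz := Qinj _ _ (T_Fq x2) (T_Fq x1) (mulfI d0 e1).
have hTT : T x1 = T x2 by rewrite -T_delta -hz T_delta.
move: eP; rewrite /Pmap hTT => /addrI.
have kn0 : k.[T x2] != 0 by rewrite -T_delta; exact: (hk _ (T_Fq x2)).2.
move/(mulfI kn0) => hL; apply/eqP; rewrite -subr_eq0; apply/eqP.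
by apply: ker_trivial => //; rewrite Lin_subx ?hL ?hTT subrr.
Qed.

Lemma over_Xn1 : OVER ('X^n - 1).
Proof. by apply: over_add; [exact: over_Xn | rewrite -polyC1; apply/over_opp/over_C/Fq1]. Qed.

Lemma Lin_Xn1 x : Lin q ('X^n - 1) x = 0.
Proof. by rewrite Lin_sub Lin_Xn xqn -polyC1 Lin_const mul1r subrr. Qed.

Lemma Lin_1 x : Lin q 1 x = x.
Proof. by rewrite -polyC1 Lin_const mul1r. Qed.

Lemma ga_a : (ga n a).[a] = n%:R * a^-1.
Proof.
rewrite ga_eq /Sga horner_sum.
rewrite (eq_bigr (fun _ => a^-1)); last first.
  move=> i _; rewrite Sga_term hornerZ hornerXn -exprD -a_pred.
  by congr (_ ^+ _); have := ltn_ord i; lia.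
by rewrite sumr_const card_ord mulr_natl.
Qed.

Lemma part2 (R H F : {poly L}) : bijective P ->
  {in FQ, forall x, R.[x] \in FQ /\ Q R.[x] = x} ->
  (if (p %| n)%N then
        (size H <= n)%N /\ ('X^n - 1) %| (h * H - 1) /\
        ('X^q - 'X) %|
          (F - ((- (k ^+ (q - 2)) * (LinP q H \Po f)) \Po (delta *: R)))
      else
        (size H <= n.-1)%N /\ ga n a %| (h * H - 1) /\
        ('X^q - 'X) %|
          (F - ((- (k ^+ (q - 2)) * (LinP q H \Po f)
                 + (a * (1 - h.[a] * H.[a]) / n%:R) *: 'X) \Po (delta *: R)))) ->
  cancel P (P0map q n a delta k R H F) /\ cancel (P0map q n a delta k R H F) P.
Proof.
move=> bP hR hcase.
have [cp [QF Qinj]] := part1.1 bP.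
suff c1 : cancel P (P0map q n a delta k R H F).
  by split => //; apply/(bij_can_sym bP).
have hFs : forall M, ('X^q - 'X) %| (F - (M \Po (delta *: R))) ->
    forall s, s \in FQ -> F.[s] = M.[delta * R.[s]].
  move=> M /dvdpP [m hm] s /FqP hs.
  have := congr1 (fun u => u.[s]) hm; rewrite /= !hornerE hs subrr mulr0.
  by move/eqP; rewrite subr_eq0 horner_comp hornerZ => /eqP.
move=> x.
have hz := T_Fq x; set z := delta^-1 * T x in hz *.
have hy : T x = delta * z by rewrite /z T_delta.
set y := T x in hy *.
have hQz := Q_Fq _ hz.
have hRz : R.[Q z] = z.
  have [hR1 hR2] := hR _ hQz; exact: Qinj _ _ hR1 hz hR2.
have hTw : delta^-1 * T (P x) = Q z by rewrite key mulKf.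
have [kF kn0] := hk _ hz; rewrite -hy in kF kn0.
set c := k.[y] ^+ (q - 2).
have hck : c * k.[y] = 1.
  rewrite /c -exprSr; have /FqP kq := kF.
  have hq := q_gt1; have -> : (q - 2).+1 = q.-1 by lia.
  apply: (mulIf kn0); rewrite mul1r -exprSr prednK ?kq //; lia.
have hLH : Lin q H (P x) = Lin q H f.[y] + k.[y] * Lin q (H * h) x.
  by rewrite /Pmap -/y Lin_addx Lin_scalex // Lin_mul.
rewrite /P0map -/y hTw hRz -hy -/c hLH.
case: ifP hcase => hpn [_ [hdiv hF]].
  rewrite (hFs _ hF _ hQz) hRz -hy !hornerE -/c horner_comp -/(Lin q H _).
  case/dvdpP: hdiv => m hm.
  have -> : H * h = m * ('X^n - 1) + 1 by rewrite mulrC -hm subrK.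
  rewrite Lin_add (Lin_mul _ _ _ over_Xn1) Lin_Xn1 Lin_0x Lin_1 add0r.
  by rewrite mulrDr mulrA hck mul1r mulNr addKr.
rewrite (hFs _ hF _ hQz) hRz -hy !hornerE -/c horner_comp -/(Lin q H _).
case/dvdpP: hdiv => m hm.
have -> : H * h = m * ga n a + 1 by rewrite mulrC -hm subrK.
rewrite Lin_add (Lin_mul _ _ _ ga_over) Lin_1 -/y hy Lin_delta //.
have hma : m.[a] = a * (h.[a] * H.[a] - 1) / n%:R.
  have := congr1 (fun u => u.[a]) hm; rewrite /= !hornerE ga_a => ->.
  have nn0 : (n%:R : L) != 0 by rewrite -(dvdn_pcharf chp) hpn.
  by field; rewrite nn0 a_neq0.
have cE : c = k.[y]^-1 by apply: (mulIf kn0); rewrite hck mulVf.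
have nn0 : (n%:R : L) != 0 by rewrite -(dvdn_pcharf chp) hpn.
rewrite hma cE hy; rewrite hy in kn0; field; by rewrite nn0 kn0.
Qed.

End Frob.

Theorem theorem3p9 (L : finFieldType) (p q e n : nat)
  (a delta : L) (f h k : {poly L}) :
  prime p -> p \in [pchar L] -> (0 < e)%N -> q = (p ^ e)%N ->
  (0 < n)%N -> #|L| = (q ^ n)%N ->
  a \in Fq q -> a ^+ n = 1 ->
  delta != 0 -> delta ^+ q = a * delta ->
  poly_over_Fq q h ->
  {in Fq q, forall x, k.[delta * x] \in Fq q /\ k.[delta * x] != 0} ->
  (bijective (Pmap q n a f h k) <->
     coprimep h (ga n a) /\ permutes_on (Fq q) (Qbar q n a delta f h k))
  /\
  (bijective (Pmap q n a f h k) ->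
   forall R H F : {poly L},
     {in Fq q, forall x,
        R.[x] \in Fq q /\ Qbar q n a delta f h k R.[x] = x} ->
     poly_over_Fq q H ->
     (if (p %| n)%N then
        (size H <= n)%N /\ ('X^n - 1) %| (h * H - 1) /\
        ('X^q - 'X) %|
          (F - ((- (k ^+ (q - 2)) * (LinP q H \Po f)) \Po (delta *: R)))
      else
        (size H <= n.-1)%N /\ ga n a %| (h * H - 1) /\
        ('X^q - 'X) %|
          (F - ((- (k ^+ (q - 2)) * (LinP q H \Po f)
                 + (a * (1 - h.[a] * H.[a]) / n%:R) *: 'X) \Po (delta *: R)))) ->
     cancel (Pmap q n a f h k) (P0map q n a delta k R H F) /\
     cancel (P0map q n a delta k R H F) (Pmap q n a f h k)).
Proof.
move=> pr_p chp e_gt0 qE n_gt0 cardL aFq an1 d0 dq hh hk; split.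
  exact: (@part1 L p q e pr_p chp e_gt0 qE n a delta n_gt0 cardL aFq an1 d0 dq f h k hh hk).
move=> bP R H F hR _ hc.
exact: (@part2 L p q e pr_p chp e_gt0 qE n a delta n_gt0 cardL aFq an1 d0 dq f h k hh hk R H F bP hR hc).
Qed.
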